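(* In the exploration process and with the random variables $M(t,i)$ described in the context, the sequence of random variables $$M(0,n-a),\,M(1,1),\dots,M(1,n-a),\,M(2,1),\dots,M(n,n-a)$$ (indexed in lexicographic order of $(t,i)$) forms a martingale with respect to the filtration it generates.
   Context: Let $r\ge2$, $0<p<1$, and consider the random graph $G(n,p)$ on $[n]$ (each edge independently present with probability $p$). Let the initially infected set be $\mathcal{A}(0)=\{1,\dots,a\}$. Exploration process: set $\mathcal{Z}(0)=\emptyset$. For each step $t=1,\dots,n$: if $\mathcal{A}(t-1)\setminus\mathcal{Z}(t-1)\neq\emptyset$, pick a vertex $u_t$ in it by an arbitrary rule and set $\mathcal{Z}(t)=\mathcal{Z}(t-1)\cup\{u_t\}$; otherwise $\mathcal{Z}(t)=\mathcal{Z}(t-1)$. For $t\ge0$ and $i\in[n-a]$ let $X(t,i)$ be the indicator that vertex $a+i$ has at least $r$ neighbours in $\mathcal{Z}(t)$, and set $\mathcal{A}(t)=\mathcal{A}(0)\cup\{a+i: X(t,i)=1,\ i\in[n-a]\}$. Let $T$ be the smallest $t$ with $\mathcal{A}(t)=\mathcal{Z}(t)$ (equivalently $|\mathcal{A}(t)|=t$); $\mathcal{A}(T)$ is the final infected set of bootstrap percolation with threshold $r$. Let $\hat\pi(t)=\mathbb{P}[\mathrm{Bin}(t,p)\ge r]$ and define the random quantity $\pi(t)=\hat\pi(t)$ for $t\le T$ and $\pi(t)=\hat\pi(T)$ for $t>T$. Each step $t\ge1$ is divided into rounds $(t,1),\dots,(t,n-a)$, ordered lexicographically, preceded by $(0,n-a)$.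 For $(t,i)\ge(0,n-a)$ define $$M(t,i):=\sum_{j=1}^{i}\frac{X(t,j)-\pi(t)}{1-\pi(t)}+\sum_{j=i+1}^{n-a}\frac{X(t-1,j)-\pi(t-1)}{1-\pi(t-1)}.$$ *)

(* Defs.v *)
From mathcomp Require Import all_boot all_order all_algebra.
Set Implicit Arguments. Unset Strict Implicit. Unset Printing Implicit Defensive.
Import Order.TTheory GRing.Theory Num.Theory.
Local Open Scope ring_scope.

(* finite space, sigma(Y 0,...,Y k) is generated by the level sets of  *)
(* the vector (Y 0,...,Y k), so  E[Y (k+1) | Y 0..Y k] = Y k  a.s.     *)
(* means exactly: the P-weighted sum of  Y (k+1) - Y k  over every     *)
(* such level set (atom) vanishes.  Integrability is automatic.        *)
Definition natural_martingale (R : numDomainType) (Omega : finType)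
  (P : Omega -> R) (N : nat) (Y : nat -> Omega -> R) : Prop :=
  forall k : nat, (k < N)%N -> forall w0 : Omega,
    \sum_(w | [forall j : 'I_k.+1, Y j w == Y j w0]) P w * (Y k.+1 w - Y k w) = 0.

Section Bootstrap.
Variables (R : realFieldType) (n a r : nat) (p : R).

(* Vertices [1..n] are represented by 'I_n (vertex v+1 <-> index v). *)
Definition edge_slot := {x : 'I_n * 'I_n | (x.1 < x.2)%N}.

Definition graph := {set edge_slot}.

Definition Gnp (G : graph) : R :=
  \prod_(e : edge_slot) (if e \in G then p else 1 - p).

Definition adj (G : graph) (u v : 'I_n) : bool :=
  [exists e in G, (val e == (u, v)) || (val e == (v, u))].

Definition nbr_count (G : graph) (Z : {set 'I_n}) (v : 'I_n) : nat :=
  #|[set u in Z | adj G u v]|.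

(* A(t) as a function of Z(t): the initially infected vertices 1..a
   (indices < a) together with the vertices a+i having >= r neighbours in Z. *)
Definition Aset (G : graph) (Z : {set 'I_n}) : {set 'I_n} :=
  [set v : 'I_n | (v < a)%N || ((a <= v)%N && (r <= nbr_count G Z v)%N)].

(* The selection rule: at step t, given Z(t-1) and A(t-1), it picks a vertex
   (required to lie in A(t-1) \ Z(t-1) whenever this set is nonempty). *)
Variable rule : nat -> {set 'I_n} -> {set 'I_n} -> 'I_n.

Fixpoint Zset (G : graph) (t : nat) : {set 'I_n} :=
  match t with
  | 0 => set0
  | t'.+1 =>
      let Z := Zset G t' in
      let A := Aset G Z in
      if A :\: Z != set0 then rule t Z A |: Z else Z
  end.

(* T = smallest t with A(t) = Z(t) (it always exists with T <= n). *)
Definition Tstop (G : graph) : nat :=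
  find (fun t => Aset G (Zset G t) == Zset G t) (iota 0 n.+1).

(* X(t, j+1): vertex a+j+1 (index a+j) has >= r neighbours in Z(t);
   here j ranges over 0 .. n-a-1 (0-based). *)
Definition Xind (G : graph) (t j : nat) : bool :=
  [exists u : 'I_n, (val u == a + j)%N && (r <= nbr_count G (Zset G t) u)%N].

(* hat pi(t) = P[Bin(t,p) >= r] *)
Definition pihat (t : nat) : R :=
  \sum_(r <= k < t.+1) 'C(t, k)%:R * p ^+ k * (1 - p) ^+ (t - k).

Definition piT (G : graph) (t : nat) : R := pihat (minn t (Tstop G)).

(* M(t,i) = sum_{j=1}^i (X(t,j)-pi(t))/(1-pi(t))
          + sum_{j=i+1}^{n-a} (X(t-1,j)-pi(t-1))/(1-pi(t-1)),
   with 0-based summation index j0 = j-1. *)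
Definition Mti (G : graph) (t i : nat) : R :=
  \sum_(0 <= j < i) (((Xind G t j)%:R - piT G t) / (1 - piT G t))
  + \sum_(i <= j < n - a) (((Xind G t.-1 j)%:R - piT G t.-1) / (1 - piT G t.-1)).

(* The sequence M(0,n-a), M(1,1), ..., M(1,n-a), M(2,1), ..., M(n,n-a):
   term k >= 1 is M(t,i) with t = (k-1) div (n-a) + 1, i = (k-1) mod (n-a) + 1;
   the last index is n*(n-a). *)
Definition Mseq (k : nat) (G : graph) : R :=
  if k is k'.+1 then Mti G (k' %/ (n - a)).+1 (k' %% (n - a)).+1
  else Mti G 0 (n - a).

End Bootstrap.

(* Main.v *)
Require Import Defs.
From mathcomp Require Import all_boot all_order all_algebra zify ring lra.
Import Order.TTheory GRing.Theory Num.Theory.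
Local Open Scope ring_scope.
Set Implicit Arguments. Unset Strict Implicit. Unset Printing Implicit Defensive.

Section Gen.
Variables (R : comRingType) (p : R) (T : finType).

Definition W (A G : {set T}) : R := \prod_(e in A) (if e \in G then p else 1 - p).

Lemma W_sub (A K : {set T}) : K \subset A ->
  W A K = p ^+ #|K| * (1 - p) ^+ (#|A| - #|K|).
Proof.
move=> sKA; rewrite /W (bigID (fun e => e \in K)) /=.
rewrite (eq_bigr (fun _ => p)); last by move=> e /andP[_ ->].
rewrite [X in _ * X](eq_bigr (fun _ => 1 - p)); last by move=> e /andP[_ nK]; rewrite (negbTE nK).
rewrite !prodr_const; congr (_ ^+ _ * _ ^+ _).
  apply: eq_card => e /=; apply/andP/idP => [[]//|eK]; split=> //.
  exact: (subsetP sKA).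
rewrite -(cardsID K A) (setIidPr sKA) addKn.
by apply: eq_card => e; rewrite /= !inE andbC.
Qed.

Lemma binsum (A : {set T}) (phi : nat -> R) :
  \sum_(K : {set T} | K \subset A) W A K * phi #|K| =
  \sum_(k < #|A|.+1) 'C(#|A|, k)%:R * p ^+ k * (1 - p) ^+ (#|A| - k) * phi k.
Proof.
rewrite (partition_big (fun K : {set T} => (inord #|K| : 'I_#|A|.+1)) xpredT) //=.
apply: eq_bigr => k _.
rewrite (eq_bigr (fun _ => p ^+ k * (1 - p) ^+ (#|A| - k) * phi k)); last first.
  move=> K /andP[sKA /eqP <-]; rewrite W_sub // inordK //.
  by rewrite ltnS subset_leq_card.
rewrite sumr_const -cards_draws.
rewrite -!mulrA mulr_natl; congr (_ *+ _); rewrite cardsE; apply: eq_card => K /=.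
change ((K \subset A) && (inord #|K| == k) = (K \subset A) && (#|K| == k)).
apply/andP/andP => [[sKA /eqP <-]|[sKA /eqP Kk]]; split=> //.
  by rewrite inordK // ltnS subset_leq_card.
by apply/eqP/val_inj; rewrite /= inordK // ltnS subset_leq_card.
Qed.

Lemma totalW (A : {set T}) : \sum_(K : {set T} | K \subset A) W A K = 1.
Proof.
transitivity (\sum_(k < #|A|.+1) 'C(#|A|, k)%:R * p ^+ k * (1 - p) ^+ (#|A| - k) * 1).
  rewrite -(binsum A (fun _ => 1)) /=.
  by apply: eq_bigr => K _; rewrite mulr1.
transitivity ((1 - p + p) ^+ #|A|); last by rewrite subrK expr1n.
rewrite exprDn; apply: eq_bigr => k _.
by rewrite mulr1 mulr_natl mulrnAl mulrC.
Qed.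

Lemma WU (A B G : {set T}) : [disjoint A & B] ->
  W (A :|: B) G = W A G * W B G.
Proof.
move=> dAB; rewrite /W (eq_bigl [predU A & B]); last by move=> e; rewrite !inE.
by rewrite bigU.
Qed.

Lemma W_ext (A G G' : {set T}) : (forall e, e \in A -> (e \in G) = (e \in G')) ->
  W A G = W A G'.
Proof. by move=> H; apply: eq_bigr => e /H ->. Qed.

Lemma core (A B h : {set T}) (F : {set T} -> R) : [disjoint A & B] -> h \subset B ->
  \sum_(G : {set T} | (G \subset A :|: B) && (G :&: B == h)) W (A :|: B) G * F (G :&: A)
  = W B h * \sum_(K : {set T} | K \subset A) W A K * F K.
Proof.
move=> dAB shB.
rewrite (reindex_onto (fun K => K :|: h) (fun G => G :&: A)) /=; last first.
  move=> G /andP[sG /eqP GB]; apply/setP => e; rewrite !inE -GB !inE.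
  case eG: (e \in G) => //=; have := subsetP sG e eG; rewrite inE.
  by case: (e \in A); case: (e \in B).
rewrite mulr_sumr; apply: eq_big => K.
  apply/idP/idP => [/andP[_ /eqP <-]|sKA]; first exact: subsetIr.
  have hKA e : e \in K -> e \in A := subsetP sKA e.
  have hhB e : e \in h -> e \in B := subsetP shB e.
  have hAB e : e \in A -> e \in B = false := disjointFr dAB.
  apply/andP; split; first (apply/andP; split).
  - apply/subsetP => e; rewrite !inE; case/orP => [/hKA -> //| /hhB ->]; by rewrite orbT.
  - apply/eqP/setP => e; rewrite !inE.
    case eh: (e \in h); first by rewrite orbT hhB.
    by case eK: (e \in K) => //=; rewrite hAB ?hKA.
  - apply/eqP/setP => e; rewrite !inE.
    case eK: (e \in K); first by rewrite hKA.
    by case eh: (e \in h) => //=; apply/negbTE/negP => eA; move: (hhB e eh); rewrite hAB.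
move=> /andP[_ /eqP HK].
have sKA : K \subset A by rewrite -HK subsetIr.
have hKA e : e \in K -> e \in A := subsetP sKA e.
have hhB e : e \in h -> e \in B := subsetP shB e.
have hAB e : e \in A -> e \in B = false := disjointFr dAB.
rewrite HK.
rewrite WU // mulrA [W A _ * _]mulrC; congr (_ * _ * _); apply: W_ext => e eX; rewrite !inE.
  all: first [ (case eK: (e \in K) => /=; last by []); by have := hAB e (hKA e eK); rewrite eX
             | (case eh: (e \in h); last by rewrite orbF); by have := hAB e eX; rewrite (hhB e eh) ].
Qed.

Lemma marg (D D' : {set T}) (F : {set T} -> R) : D' \subset D ->
  \sum_(K : {set T} | K \subset D) W D K * F (K :&: D') =
  \sum_(K : {set T} | K \subset D') W D' K * F K.
Proof.
move=> sD; set B := D :\: D'.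
have DU : D' :|: B = D by rewrite /B -{1}(setIidPr sD) setID.
have dj : [disjoint D' & B].
  by rewrite -setI_eq0; apply/eqP/setP => e; rewrite !inE; case: (e \in D').
rewrite (partition_big (fun K : {set T} => K :&: B) (fun h => h \subset B)); last first.
  by move=> K _; apply: subsetIr.
rewrite -DU.
rewrite (eq_bigr (fun h => W B h * \sum_(K : {set T} | K \subset D') W D' K * F K)).
  by rewrite -mulr_suml totalW mul1r.
move=> h shB; exact: core.
Qed.

Lemma sum_ge (m r : nat) (f : nat -> R) :
  \sum_(k < m.+1) f k * (r <= k)%:R = \sum_(r <= k < m.+1) f k.
Proof.
rewrite -(big_mkord xpredT (fun k => f k * (r <= k)%:R)).
have [le|lt] := leqP r m.+1.
  rewrite (big_cat_nat (leq0n r) le) /=.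
  have -> : \sum_(0 <= i < r) f i * (r <= i)%:R = 0.
    rewrite big_nat big1 // => k /andP[_ kr]; by rewrite leqNgt kr mulr0.
  rewrite add0r big_nat [RHS]big_nat; apply: eq_bigr => k /andP[rk _]; by rewrite rk mulr1.
rewrite [RHS]big_geq ?(ltnW lt) // big_nat big1 // => k /andP[_ km].
by rewrite leqNgt (leq_trans km (ltnW lt)) mulr0.
Qed.

Lemma binsum_ge (A : {set T}) (r : nat) :
  \sum_(K : {set T} | K \subset A) W A K * (r <= #|K|)%:R =
  \sum_(r <= k < #|A|.+1) 'C(#|A|, k)%:R * p ^+ k * (1 - p) ^+ (#|A| - k).
Proof. rewrite (binsum A (fun k => (r <= k)%:R)) /=; exact: sum_ge. Qed.

Lemma splitW (D h : {set T}) (F : {set T} -> R) : h \subset ~: D ->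
  \sum_(G : {set T} | G :&: ~: D == h) (\prod_e (if e \in G then p else 1 - p)) * F (G :&: D)
  = W (~: D) h * \sum_(K : {set T} | K \subset D) W D K * F K.
Proof.
move=> sh; have dj : [disjoint D & ~: D] by rewrite -setI_eq0 setICr.
rewrite -(core F dj sh).
apply: eq_big => G; first by rewrite setUCr subsetT.
by move=> _; rewrite /W setUCr; congr (_ * _); apply: eq_bigl => e; rewrite inE.
Qed.

End Gen.


Section Graph.
Variables (n : nat) (v : 'I_n).

Definition Dv : {set edge_slot n} := [set e : edge_slot n | ((val e).1 == v) || ((val e).2 == v)].
Definition DS (S : {set 'I_n}) : {set edge_slot n} :=
  [set e : edge_slot n | (((val e).1 == v) && ((val e).2 \in S)) || (((val e).2 == v) && ((val e).1 \in S))].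
Definition Gv (G : graph n) : graph n := G :&: ~: Dv.

Lemma adj_Gv (G : graph n) w u : w != v -> u != v -> adj (Gv G) w u = adj G w u.
Proof.
move=> wv uv; apply: eq_existsb => e; rewrite !inE.
case E: ((val e == (w, u)) || (val e == (u, w))); rewrite ?andbF ?andbT //.
case/orP: E => /eqP -> /=; by rewrite (negbTE wv) (negbTE uv) andbT.
Qed.

Lemma adj_Gv_v (G : graph n) w : adj (Gv G) w v = false.
Proof.
apply/existsP => -[e]; rewrite !inE => /andP[/andP[_ ne] /orP[] /eqP E];
  by rewrite E /= eqxx ?orbT in ne.
Qed.

Lemma DS_sub (S : {set 'I_n}) : DS S \subset Dv.
Proof.
apply/subsetP => e; rewrite !inE => /orP[] /andP[-> _] //; by rewrite orbT.
Qed.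

Definition oth (e : edge_slot n) : 'I_n := if (val e).1 == v then (val e).2 else (val e).1.

Lemma nbr_DS (G : graph n) (S : {set 'I_n}) : v \notin S -> nbr_count G S v = #|G :&: DS S|.
Proof.
move=> vS; rewrite /nbr_count.
have -> : [set u in S | adj G u v] = oth @: (G :&: DS S).
  apply/setP => u; rewrite inE; apply/andP/imsetP.
    case=> uS /existsP[e /andP[eG E]].
    have uv : u != v by apply: contraNneq vS => <-.
    exists e; last first.
      rewrite /oth; case/orP: E => /eqP -> /=; by rewrite ?(negbTE uv) ?eqxx.
    rewrite !inE eG /=; case/orP: E => /eqP -> /=; by rewrite eqxx uS ?orbT.
  case=> -[[x y] l]; rewrite !inE /oth /= => /andP[eG].
  case/orP => /andP[/eqP e1 e2] ->.
    rewrite e1 eqxx e2; split=> //; apply/existsP; exists (exist _ (x, y) l).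
    by rewrite eG /= e1 eqxx orbT.
  case: ifP => [/eqP e1'|_].
    by move: (l); rewrite /= e1' e1 ltnn.
  split=> //; apply/existsP; exists (exist _ (x, y) l); by rewrite eG /= e1 eqxx.
rewrite card_in_imset //.
move=> e1 e2; rewrite !inE /oth => /andP[_ E1] /andP[_ E2] Eq.
apply: val_inj; move: (valP e1) (valP e2) E1 E2 Eq.
case: (val e1) => x1 y1; case: (val e2) => x2 y2 /= l1 l2.
case/orP => /andP[/eqP ? _]; case/orP => /andP[/eqP ? _]; subst; rewrite ?eqxx /=.
- by move=> ->.
- by case: ifP => [/eqP E|_ E]; subst; lia.
- by case: ifP => [/eqP E|_ E]; subst; lia.
- case: ifP => [/eqP E|_]; first by subst; lia.
  case: ifP => [/eqP E|_]; first by subst; lia.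
  by move=> ->.
Qed.

Lemma card_DS (S : {set 'I_n}) : v \notin S -> #|DS S| = #|S|.
Proof.
move=> vS; rewrite -[DS S]setTI -nbr_DS //; apply: eq_card => u; rewrite inE.
case uS: (u \in S) => //=.
have uv : u != v by apply: contraNneq vS => <-.
case: (ltngtP u v) => [l|l|/val_inj E]; last by rewrite E eqxx in uv.
  apply/existsP; exists (exist _ (u, v) l : edge_slot n); by rewrite inE eqxx.
apply/existsP; exists (exist _ (v, u) l : edge_slot n); by rewrite inE eqxx orbT.
Qed.

End Graph.


Section Expl.
Variables (n a r : nat) (rule : nat -> {set 'I_n} -> {set 'I_n} -> 'I_n).
Hypothesis hr : (0 < r)%N.
Hypothesis hrule : forall (t : nat) (Z A : {set 'I_n}), A :\: Z != set0 -> rule t Z A \in A :\: Z.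

Local Notation Aset := (Aset a r).
Local Notation Zset := (Zset a r rule).

Lemma nbr_mono (G : graph n) (Z Z' : {set 'I_n}) u : Z \subset Z' -> (nbr_count G Z u <= nbr_count G Z' u)%N.
Proof.
move=> sZ; apply: subset_leq_card; apply/subsetP => w; rewrite !inE => /andP[/(subsetP sZ) -> ->]; done.
Qed.

Lemma Aset_mono (G : graph n) (Z Z' : {set 'I_n}) : Z \subset Z' -> Aset G Z \subset Aset G Z'.
Proof.
move=> sZ; apply/subsetP => u; rewrite !inE => /orP[->//|/andP[-> H]].
by rewrite (leq_trans H (nbr_mono _ _ sZ)) orbT.
Qed.

Lemma Zset_S (G : graph n) s : Zset G s \subset Zset G s.+1.
Proof. by rewrite /=; case: ifP => _ //; apply: subsetUr. Qed.

Lemma Zset_mono (G : graph n) s s' : (s <= s')%N -> Zset G s \subset Zset G s'.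
Proof.
elim: s' => [|s' IH]; first by rewrite leqn0 => /eqP ->.
rewrite leq_eqVlt => /orP[/eqP ->//|]; rewrite ltnS => /IH H.
exact: subset_trans H (Zset_S _ _).
Qed.

Lemma Zset_step (G : graph n) s : Zset G s.+1 \subset Zset G s :|: Aset G (Zset G s).
Proof.
rewrite /=; case: ifP => [/(hrule s.+1)|_]; last exact: subsetUl.
rewrite inE => /andP[_ rA]; apply/subsetP => u; rewrite in_setU in_setU1 => /orP[/eqP ->|->//].
by rewrite rA orbT.
Qed.

Lemma Zset_subA (G : graph n) s : Zset G s \subset Aset G (Zset G s).
Proof.
elim: s => [|s IH]; first exact: sub0set.
have HA := Aset_mono G (Zset_S G s).
apply: subset_trans (Zset_step G s) _.
by rewrite subUset (subset_trans IH HA) HA.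
Qed.

Variable v : 'I_n.
Hypothesis av : (a <= v)%N.

Lemma v_Aset (G : graph n) (Z : {set 'I_n}) : (v \in Aset G Z) = (r <= nbr_count G Z v)%N.
Proof. by rewrite inE ltnNge av. Qed.

Lemma nbr_Gv (G : graph n) (Z : {set 'I_n}) u : v \notin Z -> u != v -> nbr_count (Gv v G) Z u = nbr_count G Z u.
Proof.
move=> vZ uv; apply: eq_card => w; rewrite !inE.
case wZ: (w \in Z) => //=; apply: adj_Gv => //.
by apply: contraNneq vZ => <-.
Qed.

Lemma nbr_Gv_v (G : graph n) (Z : {set 'I_n}) : nbr_count (Gv v G) Z v = 0%N.
Proof.
apply: eq_card0 => w; by rewrite !inE adj_Gv_v andbF.
Qed.

Lemma Aset_Gv (G : graph n) (Z : {set 'I_n}) : v \notin Z -> v \notin Aset G Z -> Aset (Gv v G) Z = Aset G Z.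
Proof.
move=> vZ vA; apply/setP => u.
case: (eqVneq u v) => [->|uv].
  rewrite (negbTE vA) v_Aset nbr_Gv_v; by rewrite leqNgt hr.
by rewrite !inE nbr_Gv.
Qed.

Lemma v_AGv (G : graph n) (Z : {set 'I_n}) : v \notin Aset (Gv v G) Z.
Proof. by rewrite v_Aset nbr_Gv_v -ltnNge. Qed.

Lemma v_ZGv (G : graph n) s : v \notin Zset (Gv v G) s.
Proof. by apply/negP => /(subsetP (Zset_subA _ s)); apply/negP; apply: v_AGv. Qed.

Lemma Zeq (G : graph n) s0 :
  (forall s, (s < s0)%N -> Zset G s = Zset (Gv v G) s -> v \notin Aset G (Zset G s)) ->
  forall s, (s <= s0)%N -> Zset G s = Zset (Gv v G) s.
Proof.
move=> H; elim=> [//|s IH] ss0.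
have E := IH (ltnW ss0).
have HA : Aset (Gv v G) (Zset G s) = Aset G (Zset G s).
  apply: Aset_Gv; last exact: H.
  by rewrite E v_ZGv.
rewrite /= -E HA; done.
Qed.

End Expl.


Lemma find_minn (T : Type) (P P' : pred T) (l : seq T) x0 m :
  (forall k, (k < m)%N -> (k < size l)%N -> P (nth x0 l k) = P' (nth x0 l k)) ->
  minn m (find P l) = minn m (find P' l).
Proof.
elim: l m => [|x l IH] m H /=; first by [].
case: m H => [|m] H; first by rewrite !min0n.
have := H 0%N erefl erefl; rewrite /= => ->.
case: (P' x) => //; rewrite !minnSS; congr _.+1; apply: IH => k km kl.
exact: (H k.+1).
Qed.

Lemma binom_one (R : comNzRingType) (p : R) s :
  \sum_(k < s.+1) 'C(s, k)%:R * p ^+ k * (1 - p) ^+ (s - k) = 1.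
Proof.
transitivity ((1 - p + p) ^+ s); last by rewrite subrK expr1n.
rewrite exprDn; apply: eq_bigr => k _.
by rewrite mulr_natl mulrnAl mulrC.
Qed.

Lemma pihat_lt1 (R : realFieldType) r (p : R) s : (0 < r)%N -> 0 < p -> p < 1 ->
  0 < 1 - pihat r p s.
Proof.
move=> hr p0 p1.
have E : pihat r p s = \sum_(k < s.+1) ('C(s, k)%:R * p ^+ k * (1 - p) ^+ (s - k)) * (r <= k)%:R.
  by rewrite (sum_ge s r (fun k => 'C(s, k)%:R * p ^+ k * (1 - p) ^+ (s - k))).
rewrite E -{1}(binom_one p s) -sumrB big_ord_recl /= leqNgt hr /= mulr0 subr0.
rewrite bin0 mul1r expr0 mul1r subn0.
apply: ltr_pwDl; first by apply: exprn_gt0; rewrite subr_gt0.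
apply: sumr_ge0 => k _.
rewrite -[X in X - _]mulr1 -mulrBr mulr_ge0 //.
  apply: mulr_ge0; [apply: mulr_ge0; [by [] | apply: exprn_ge0; exact: ltW] |].
  by apply: exprn_ge0; rewrite subr_ge0 ltW.
by case: (r <= _)%N; rewrite ?subrr ?subr0.
Qed.

Lemma divmod_uniq L q rr : (rr < L)%N -> ((q * L + rr) %/ L = q)%N /\ ((q * L + rr) %% L = rr)%N.
Proof.
move=> rL; have L0 : (0 < L)%N by case: L rL.
by rewrite divnMDl // divn_small // addn0 modnMDl modn_small.
Qed.
Lemma mod_lt_of k j L : (0 < L)%N -> (j < k)%N -> (j %/ L = k %/ L)%N -> (j %% L < k %% L)%N.
Proof. move=> L0 H1 H2. have := divn_eq j L; have := divn_eq k L; rewrite H2; lia. Qed.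
Lemma divmodS_lt k L : (0 < L)%N -> ((k %% L).+1 < L)%N -> (k.+1 %/ L = k %/ L)%N /\ (k.+1 %% L = (k %% L).+1)%N.
Proof. move=> L0 H. have E := divn_eq k L. set q := (k %/ L)%N in E *; set rr := (k %% L)%N in E H *. rewrite E -addnS. exact: divmod_uniq. Qed.
Lemma divmodS_eq k L : (0 < L)%N -> ((k %% L).+1 = L)%N -> (k.+1 %/ L = (k %/ L).+1)%N /\ (k.+1 %% L = 0)%N.
Proof. move=> L0 H. have E := divn_eq k L. set q := (k %/ L)%N in E *; set rr := (k %% L)%N in E H *. rewrite E -addnS H -(addn0 (_ + L)%N) -mulSnr. exact: divmod_uniq. Qed.

Section Main.
Variables (R : realFieldType) (n a r : nat) (p : R) (rule : nat -> {set 'I_n} -> {set 'I_n} -> 'I_n).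
Hypothesis hr : (0 < r)%N.
Hypothesis hrule : forall (t : nat) (Z A : {set 'I_n}), A :\: Z != set0 -> rule t Z A \in A :\: Z.

Local Notation Aset := (Aset a r).
Local Notation Zset := (Zset a r rule).
Local Notation Xind := (Xind a r rule).
Local Notation piT := (piT a r p rule).
Local Notation Tstop := (Tstop a r rule).

Variables (i T0 : nat).
Hypothesis ain : (a + i < n)%N.
Local Notation t := T0.+1.
Definition vv : 'I_n := Ordinal ain.
Local Notation v := vv.
Local Notation Gv := (Gv v).
Lemma av : (a <= v)%N. Proof. by rewrite /= leq_addr. Qed.

Lemma Xind_v (G : graph n) s : Xind G s i = (r <= nbr_count G (Zset G s) v)%N.
Proof.
apply/existsP/idP => [[u /andP[/eqP uE H]]|H]; last by exists v; rewrite /= eqxx.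
have E : u = v by apply: val_inj.
by rewrite -E.
Qed.

Lemma Xind_other (G : graph n) s j : j != i -> v \notin Zset G s ->
  Zset G s = Zset (Gv G) s -> Xind G s j = Xind (Gv G) s j.
Proof.
move=> ji vZ E; apply: eq_existsb => u; rewrite -E.
case uE: (val u == a + j)%N => //=.
rewrite nbr_Gv //; apply: contra ji => /eqP uv.
by move/eqP: uE; rewrite uv /= => /addnI ->.
Qed.

Definition notX (G : graph n) := ~~ Xind G T0 i.

Lemma notX_lt (G : graph n) s : notX G -> (s <= T0)%N -> (nbr_count G (Zset G s) v < r)%N.
Proof.
rewrite /notX Xind_v -ltnNge => H sT.
apply: leq_ltn_trans H; apply: nbr_mono; exact: Zset_mono.
Qed.

Lemma agreeZ (G : graph n) : notX G -> forall s, (s <= t)%N -> Zset G s = Zset (Gv G) s.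
Proof.
move=> nX; apply: Zeq => //; first exact: av.
move=> s st _; rewrite v_Aset; last exact: av.
by rewrite -ltnNge; apply: notX_lt.
Qed.

Lemma notX_iff (G : graph n) : notX G = (nbr_count G (Zset (Gv G) T0) v < r)%N.
Proof.
apply/idP/idP => [nX|H].
  by rewrite -agreeZ // ?notX_lt.
have E : Zset G T0 = Zset (Gv G) T0.
  apply: (@Zeq _ _ _ _ hr hrule v av G t) => // s st Es.
  rewrite v_Aset ?av // Es -ltnNge.
  apply: leq_ltn_trans H; apply: nbr_mono; exact: Zset_mono.
by rewrite /notX Xind_v E -ltnNge.
Qed.

Lemma v_notin_Z (G : graph n) s : notX G -> (s <= t)%N -> v \notin Zset G s.
Proof. by move=> nX st; rewrite agreeZ //; apply: v_ZGv => //; exact: av. Qed.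

Lemma agreeX (G : graph n) s j : notX G -> (s <= T0)%N || ((s == t) && (j != i)) ->
  Xind G s j = Xind (Gv G) s j.
Proof.
move=> nX H.
have st : (s <= t)%N by case/orP: H => [/leqW//|/andP[/eqP -> _]].
case: (eqVneq j i) => [ji|ji]; last first.
  by apply: Xind_other => //; [apply: v_notin_Z | apply: agreeZ].
subst j.
have sT : (s <= T0)%N by move: H; case/orP => //; rewrite eqxx andbF.
rewrite !Xind_v nbr_Gv_v [in RHS]leqNgt hr leqNgt.
by rewrite notX_lt.
Qed.

Lemma agreeT (G : graph n) : notX G -> minn t (Tstop G) = minn t (Tstop (Gv G)).
Proof.
move=> nX; apply: (@find_minn nat _ _ _ 0%N) => k kt; rewrite size_iota => kn.
rewrite nth_iota // add0n.
have kT : (k <= T0)%N by [].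
rewrite -agreeZ ?(leqW kT) //.
rewrite (Aset_Gv hr av) //.
  by apply: v_notin_Z; rewrite ?(leqW kT).
by rewrite v_Aset ?av // -ltnNge notX_lt.
Qed.

Lemma agreePi (G : graph n) s : notX G -> (s <= t)%N -> piT G s = piT (Gv G) s.
Proof.
move=> nX st; rewrite /piT.
have E T : minn s T = minn s (minn t T) by rewrite minnA (minn_idPl st).
by rewrite E agreeT // -E.
Qed.

Local Notation Mti := (Mti a r p rule).
Definition term (G : graph n) s j := ((Xind G s j)%:R - piT G s) / (1 - piT G s).

Lemma Mti_agree (G G' : graph n) s i' :
  (forall j, (j < i')%N -> Xind G s j = Xind G' s j) -> (forall j, Xind G s.-1 j = Xind G' s.-1 j) ->
  piT G s = piT G' s -> piT G s.-1 = piT G' s.-1 -> Mti G s i' = Mti G' s i'.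
Proof.
move=> H1 H2 P1 P2; rewrite /Mti P1 P2; congr (_ + _).
  by rewrite !big_nat; apply: eq_bigr => j /andP[_ ji]; rewrite H1.
by apply: eq_bigr => j _; rewrite H2.
Qed.

Lemma Mti_wrap (G : graph n) s : Mti G s (n - a) = Mti G s.+1 0.
Proof. by rewrite /Mti [X in _ + X = _]big_geq // [X in _ = X + _]big_geq // addr0 add0r.
Qed.

Lemma Mti_step (G : graph n) s j : (j < n - a)%N -> Mti G s j.+1 - Mti G s j = term G s j - term G s.-1 j.
Proof.
move=> jL; rewrite /Mti big_nat_recr //= [in X in _ - X](big_ltn jL) /term.
set A := \sum_(0 <= j0 < j) _; set B := \sum_(j.+1 <= j0 < n - a) _.
set X := _ / (1 - piT G s); set Y := _ / (1 - piT G s.-1).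
ring.
Qed.

Lemma Zset_card (H : graph n) s : (s <= Tstop H)%N -> #|Zset H s| = s.
Proof.
elim: s => [|s IH] sT; first by rewrite /= cards0.
have sT' : (s < Tstop H)%N by [].
have := before_find 0%N sT'; rewrite nth_iota; last first.
  by apply: leq_trans sT (leq_trans (find_size _ _) _); rewrite size_iota.
rewrite add0n => nE.
have ne : Aset H (Zset H s) :\: Zset H s != set0.
  apply/negP; rewrite setD_eq0 => sAZ; move/negP: nE; apply.
  by rewrite eqEsubset sAZ (Zset_subA a r hrule).
rewrite /= ne cardsU1 IH ?(ltnW sT) //.
by have := hrule s.+1 ne; rewrite inE => /andP[->].
Qed.

Lemma Zset_stop (H : graph n) s : (Tstop H < n.+1)%N -> (Tstop H <= s)%N -> Zset H s = Zset H (Tstop H).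
Proof.
move=> Tn.
have hs : has (fun t => Aset H (Zset H t) == Zset H t) (iota 0 n.+1) by rewrite has_find size_iota.
have := nth_find 0%N hs.
rewrite -/(Tstop H) nth_iota // add0n => /eqP E.
elim: s => [|s IH]; first by rewrite leqn0 => /eqP ->.
rewrite leq_eqVlt => /orP[/eqP <-//|]; rewrite ltnS => /IH IHs.
by rewrite /= IHs E setDv eqxx.
Qed.

Lemma DS_mono (S S' : {set 'I_n}) : S \subset S' -> DS v S \subset DS v S'.
Proof.
move=> sS; apply/subsetP => e; rewrite !inE => /orP[] /andP[-> /(subsetP sS) ->]; by rewrite ?orbT.
Qed.

Lemma term_Gv (G : graph n) : notX G ->
  term G t i - term G T0 i =
  ((r <= #|(G :&: Dv v) :&: DS v (Zset (Gv G) t)|)%N%:R - piT (Gv G) t) / (1 - piT (Gv G) t)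
  + piT (Gv G) T0 / (1 - piT (Gv G) T0).
Proof.
move=> nX; rewrite /term (negbTE nX) Xind_v agreeZ // nbr_DS; last first.
  by apply: v_ZGv => //; exact: av.
rewrite -setIA (setIidPr (DS_sub _ _)) (agreePi nX (leqnSn _)) (agreePi nX (leqnn _)).
by rewrite sub0r mulNr opprK.
Qed.

Lemma notX_K (G : graph n) : notX G = (#|(G :&: Dv v) :&: DS v (Zset (Gv G) T0)| < r)%N.
Proof.
rewrite notX_iff nbr_DS; last by apply: v_ZGv => //; exact: av.
by rewrite -setIA (setIidPr (DS_sub _ _)).
Qed.

Hypothesis p0 : 0 < p.
Hypothesis p1 : p < 1.
Hypothesis tn : (t <= n)%N.

Lemma fiber (H : graph n) : H \subset ~: Dv v ->
  \sum_(G : graph n | notX G && (Gv G == H)) Gnp p G * (term G t i - term G T0 i) = 0.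
Proof.
move=> sH.
rewrite (eq_bigl (fun G => (G :&: ~: Dv v == H) && notX G)); last by move=> G; rewrite andbC.
rewrite big_mkcondr /=.
set D1 := DS v (Zset H T0); set D2 := DS v (Zset H t); set pi1 := piT H T0; set pi2 := piT H t.
pose F (K : {set edge_slot n}) := (#|K :&: D1| < r)%N%:R *
   (((r <= #|K :&: D2|)%N%:R - pi2) / (1 - pi2) + pi1 / (1 - pi1)).
rewrite (eq_bigr (fun G : graph n => (\prod_e (if e \in G then p else 1 - p)) * F (G :&: Dv v))); last first.
  move=> G /eqP GH; have GH' : Gv G = H := GH.
  have E : notX G = (#|(G :&: Dv v) :&: D1| < r)%N by rewrite /D1 -GH' -notX_K.
  rewrite /F -E; case nX: (notX G).
    by rewrite term_Gv // GH' -/D2 -/pi1 -/pi2 mul1r.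
  by rewrite mul0r mulr0.
rewrite splitW //; apply/eqP; rewrite mulf_eq0; apply/orP; right; apply/eqP.
have vZ s : v \notin Zset H s.
  have -> : H = Gv H by apply/setP => e; rewrite /Gv inE; case eH: (e \in H) => //=; rewrite (subsetP sH).
  by apply: v_ZGv => //; exact: av.
have Q s : \sum_(K : {set edge_slot n} | K \subset Dv v) W p (Dv v) K * (r <= #|K :&: DS v (Zset H s)|)%N%:R
    = pihat r p #|Zset H s|.
  rewrite (marg p (fun K => (r <= #|K|)%N%:R) (DS_sub _ _)) binsum_ge card_DS //.
have D12 : D1 \subset D2 by apply: DS_mono; apply: Zset_mono.
set c2 := (1 - pi2)^-1; set c1 := pi1 / (1 - pi1) - pi2 / (1 - pi2).
transitivity (\sum_(K : {set edge_slot n} | K \subset Dv v)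
   (c2 * (W p (Dv v) K * (r <= #|K :&: D2|)%N%:R) - (c2 + c1) * (W p (Dv v) K * (r <= #|K :&: D1|)%N%:R)
    + c1 * W p (Dv v) K)).
  apply: eq_bigr => K _; rewrite /F.
  have le12 : (#|K :&: D1| <= #|K :&: D2|)%N by apply: subset_leq_card; apply: setIS.
  case b1: (r <= #|K :&: D1|)%N.
    rewrite ltnNge b1 (leq_trans b1 le12) /=; rewrite /c1 /c2; ring.
  rewrite ltnNge b1 /= /c1 /c2; ring.
rewrite big_split sumrB /= -!mulr_sumr Q Q totalW.
rewrite /c1 /c2 /pi1 /pi2 /piT.
have [tT|Tt] := leqP t (Tstop H).
  rewrite !Zset_card ?(ltnW tT) // ?(minn_idPl tT) ?(minn_idPl (ltnW tT)).
  have h1 := pihat_lt1 T0 hr p0 p1; have h2 := pihat_lt1 t hr p0 p1.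
  set x := pihat r p T0 in h1 *; set y := pihat r p t in h2 *.
  field; by rewrite ?lt0r_neq0.
have TT0 : (Tstop H <= T0)%N by [].
have Tn : (Tstop H < n.+1)%N by move: Tt tn; lia.
rewrite (Zset_stop Tn (leqW TT0)) (Zset_stop Tn TT0).
rewrite ?(minn_idPr TT0) ?(minn_idPr (ltnW Tt)).
set x := pihat r p (Tstop H); set y := pihat r p #|Zset H (Tstop H)|.
ring.
Qed.

Lemma term_X (G : graph n) : ~~ notX G -> term G t i - term G T0 i = 0.
Proof.
rewrite negbK => X0.
have X1 : Xind G t i.
  move: X0; rewrite !Xind_v => H; apply: leq_trans H _; apply: nbr_mono; exact: Zset_S.
rewrite /term X0 X1 !divff ?subrr //; rewrite /piT; apply: lt0r_neq0; exact: pihat_lt1.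
Qed.

Lemma Mti_ok (G : graph n) s i' : notX G -> (s <= T0)%N || ((s == t) && (i' <= i)%N) ->
  Mti G s i' = Mti (Gv G) s i'.
Proof.
move=> nX H.
have st : (s <= t)%N by case/orP: H => [/leqW//|/andP[/eqP -> _]].
apply: Mti_agree.
- move=> j ji'; apply: agreeX => //; case/orP: H => [->//|/andP[-> ii]].
  by rewrite /=; apply/orP; right; apply/eqP => E; move: ji'; rewrite E ltnNge ii.
- move=> j; apply: agreeX => //; apply/orP; left; by case: s st {H} => //= s.
- exact: agreePi.
- by apply: agreePi => //; case: s st {H} => //= s /ltnW.
Qed.

Variable k : nat.
Hypothesis hk : (k < n * (n - a))%N.
Hypothesis hT0 : T0 = (k %/ (n - a))%N.
Hypothesis hi : i = (k %% (n - a))%N.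

Lemma Lpos : (0 < n - a)%N.
Proof. by case: (n - a)%N hk => //; rewrite muln0. Qed.

Lemma Mseq_k (G : graph n) : Mseq a r p rule k G = Mti G t i.
Proof.
have L0 := Lpos.
case: k hk hT0 hi => [|k'] _ -> ->.
  by rewrite /Mseq div0n mod0n Mti_wrap.
rewrite /Mseq.
have [lt|ge] := ltnP (k' %% (n - a)).+1 (n - a).
  by case: (divmodS_lt L0 lt) => -> ->.
have E : ((k' %% (n - a)).+1 = n - a)%N by apply/eqP; rewrite eqn_leq ge ltn_pmod.
by case: (divmodS_eq L0 E) => -> ->; rewrite E Mti_wrap.
Qed.

Lemma Mseq_agree (G : graph n) j : notX G -> (j <= k)%N ->
  Mseq a r p rule j G = Mseq a r p rule j (Gv G).
Proof.
move=> nX jk; have L0 := Lpos; case: j jk => [|j] jk /=.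
  by apply: Mti_ok.
apply: Mti_ok => //.
have le : (j %/ (n - a) <= T0)%N by rewrite hT0; apply: leq_div2r; exact: ltnW.
case: (ltnP (j %/ (n - a)) T0) => [//|ge].
have eq : (j %/ (n - a) = T0)%N by apply/eqP; rewrite eqn_leq le ge.
rewrite /= eq eqxx /= hi; apply: mod_lt_of => //; by rewrite -hT0.
Qed.
Lemma step_zero (w0 : graph n) :
  \sum_(w | [forall j : 'I_k.+1, Mseq a r p rule j w == Mseq a r p rule j w0])
     Gnp p w * (Mseq a r p rule k.+1 w - Mseq a r p rule k w) = 0.
Proof.
set atom := fun G : graph n => [forall j : 'I_k.+1, Mseq a r p rule j G == Mseq a r p rule j w0].
have iL : (i < n - a)%N by rewrite hi ltn_pmod // Lpos.
rewrite (eq_bigr (fun G => Gnp p G * (term G t i - term G T0 i))); last first.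
  move=> G _; rewrite Mseq_k.
  have -> : Mseq a r p rule k.+1 G = Mti G t i.+1 by rewrite /Mseq -hT0 -hi.
  by rewrite Mti_step.
rewrite (bigID notX) /= [X in _ + X]big1 ?addr0; last first.
  by move=> G /andP[_ nX]; rewrite term_X // mulr0.
rewrite (partition_big (fun G => Gv G) (fun H => H \subset ~: Dv v)); last first.
  by move=> G _; apply: subsetIr.
apply: big1 => H sH.
have aG (G : graph n) : notX G -> atom G = atom (Gv G).
  move=> nX; apply: eq_forallb => j; rewrite Mseq_agree //; by rewrite -ltnS.
case aH: (atom H).
  rewrite (eq_bigl (fun G => notX G && (Gv G == H))); first exact: (fiber sH).
  move=> G /=.
  case nX: (notX G); first last.
    by rewrite andbF.
  case GH: (Gv G == H); first last.
    by rewrite andbF.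
  rewrite !andbT; change (atom G = true); rewrite (aG G nX) (eqP GH) aH; reflexivity.
apply: big_pred0 => G.
case nX: (notX G); first last.
  by rewrite andbF.
case GH: (Gv G == H); first last.
  by rewrite andbF.
rewrite !andbT; change (atom G = false); rewrite (aG G nX) (eqP GH) aH; reflexivity.
Qed.


End Main.


Theorem lemma1 (R : realFieldType) (n a r : nat) (p : R)
  (rule : nat -> {set 'I_n} -> {set 'I_n} -> 'I_n) :
  (2 <= r)%N -> 0 < p -> p < 1 -> (a <= n)%N ->
  (forall (t : nat) (Z A : {set 'I_n}), A :\: Z != set0 -> rule t Z A \in A :\: Z) ->
  natural_martingale (@Gnp R n p) (n * (n - a)) (Mseq a r p rule).
Proof.
move=> hr2 p0 p1 an hrule k hk w0.
have hr : (0 < r)%N by apply: leq_trans hr2.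
have L0 : (0 < n - a)%N by case: (n - a)%N hk => //; rewrite muln0.
have ain : (a + k %% (n - a) < n)%N.
  by rewrite -{2}(subnKC an) ltn_add2l ltn_pmod.
have tn : (k %/ (n - a) < n)%N by rewrite ltn_divLR.
exact: (step_zero hr hrule ain p0 p1 tn hk erefl erefl w0).
Qed.
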